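(* Fix reals $r'>r>0$ and Young diagrams $\mu\subseteq\lambda$. Let integers $N'>N$ tend to infinity in such a way that $N'/N\to r'/r$. Regard $\lambda$ as the signature $(\lambda_1,\dots,\lambda_{N'})\in\mathbb S_{N'}$ (padded with zeros) and $\mu$ as the signature $(\mu_1,\dots,\mu_N)\in\mathbb S_N$; this makes sense once $N\ge\ell(\lambda)$. Then $$\lim\Lambda^{N'}_N(\lambda,\mu)={}^{\mathbb{YB}}\Lambda^{r'}_r(\lambda,\mu).$$
   Context: Signatures and links: - $\mathbb S_N$ is the set of integer $N$-tuples $\nu_1\ge\dots\ge\nu_N$. - $\mathrm{Dim}_N\nu=\prod_{1\le i<j\le N}\frac{\nu_i-\nu_j-i+j}{j-i}$. - For $\kappa\in\mathbb S_K$ and $\nu\in\mathbb S_N$ with $K<N$, $\mathrm{Dim}_{K,N}(\kappa,\nu)$ is the number of chains $\kappa=\lambda^{(K)}\prec\dots\prec\lambda^{(N)}=\nu$, $\lambda^{(j)}\in\mathbb S_j$. Here $\lambda\prec\nu$ means $\nu_i\ge\lambda_i\ge\nu_{i+1}$ for all $i$. - The Gelfand–Tsetlin link is $\Lambda^N_K(\nu,\kappa)=\mathrm{Dim}_K\kappa\,\mathrm{Dim}_{K,N}(\kappa,\nu)/\mathrm{Dim}_N\nu$. Young diagrams: $\ell(\lambda)$ is the number of nonzero rows of $\lambda$, and $|\lambda|$ is its number of boxes. $\dim\lambda$ (resp. $\dim\lambda/\mu$) is the number of standard Young tableaux of shape $\lambda$ (resp. skew shape $\lambda/\mu$). The Young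 bouquet link: for $r'>r>0$ and Young diagrams $\lambda,\mu$, $${}^{\mathbb{YB}}\Lambda^{r'}_r(\lambda,\mu)=\binom{|\lambda|}{|\mu|}\Big(\frac{r}{r'}\Big)^{|\mu|}\Big(1-\frac{r}{r'}\Big)^{|\lambda|-|\mu|}\frac{\dim\mu\,\dim\lambda/\mu}{\dim\lambda}$$ if $\mu\subseteq\lambda$, and $0$ otherwise. *)

(* Defs.v *)
From Stdlib Require Import Reals Lra Lia ZArith Arith List.
Import ListNotations.
Open Scope R_scope.

Definition prodR (n : nat) (f : nat -> R) : R :=
  fold_right Rmult 1 (map f (seq 0 n)).

(** * Signatures (lists of integers nu_1 >= ... >= nu_N, stored 0-indexed) *)

Definition DimN (N : nat) (nu : list Z) : R :=
  prodR N (fun j => prodR j (fun i =>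
    (IZR (nth i nu 0%Z - nth j nu 0%Z) - INR i + INR j) / (INR j - INR i))).

Definition Zrange (b a : Z) : list Z :=
  map (fun t => (b + Z.of_nat t)%Z) (seq 0 (Z.to_nat (a - b + 1))).

(** all lam in S_{N-1} with lam ≺ nu (nu in S_N): nu_i >= lam_i >= nu_{i+1} *)
Fixpoint interl (nu : list Z) : list (list Z) :=
  match nu with
  | [] => []
  | [a] => [[]]
  | a :: ((b :: _) as rest) =>
      flat_map (fun x => map (cons x) (interl rest)) (Zrange b a)
  end.

Fixpoint chains_count (kap : list Z) (d : nat) (nu : list Z) : nat :=
  match d with
  | O => if list_eq_dec Z.eq_dec kap nu then 1%nat else 0%nat
  | S d' => list_sum (map (chains_count kap d') (interl nu))
  end.

Definition DimKN (K N : nat) (kap nu : list Z) : nat := chains_count kap (N - K) nu.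

Definition GT_link (N K : nat) (nu kap : list Z) : R :=
  DimN K kap * INR (DimKN K N kap nu) / DimN N nu.

Definition young (lam : list nat) : Prop :=
  (forall i, (S i < length lam)%nat -> (nth (S i) lam 0%nat <= nth i lam 0%nat)%nat) /\
  (forall i, (i < length lam)%nat -> (0 < nth i lam 0%nat)%nat).

Definition ell (lam : list nat) : nat := length lam.
Definition size (lam : list nat) : nat := list_sum lam.

Definition contained (mu lam : list nat) : Prop :=
  forall i, (nth i mu 0%nat <= nth i lam 0%nat)%nat.

Definition containedb (mu lam : list nat) : bool :=
  forallb (fun i => Nat.leb (nth i mu 0%nat) (nth i lam 0%nat)) (seq 0 (length mu)).

Definition dec_row (lam : list nat) (i : nat) : list nat :=
  firstn i lam ++ (nth i lam 0%nat - 1)%nat :: skipn (S i) lam.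

(** number of chains mu = nu^0 ⊂ nu^1 ⊂ ... ⊂ nu^d = lam in Young's lattice,
    each step adding one box, i.e. standard Young tableaux of shape lam/mu
    (enumerated by successively removing the box containing the largest entry) *)
Fixpoint skew_count (d : nat) (lam mu : list nat) : nat :=
  match d with
  | O => if containedb mu lam then 1%nat else 0%nat
  | S d' => list_sum (map (fun i =>
        if (Nat.ltb (nth (S i) lam 0%nat) (nth i lam 0%nat) && Nat.ltb (nth i mu 0%nat) (nth i lam 0%nat))%bool
        then skew_count d' (dec_row lam i) mu else 0%nat) (seq 0 (length lam)))
  end.

Definition dim_skew (lam mu : list nat) : nat :=
  if containedb mu lam then skew_count (size lam - size mu) lam mu else 0%nat.
Definition dim (lam : list nat) : nat := dim_skew lam [].

Definition YB_link (r' r : R) (lam mu : list nat) : R :=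
  if containedb mu lam then
    Binomial.C (size lam) (size mu) * (r / r') ^ (size mu)
    * (1 - r / r') ^ (size lam - size mu)
    * (INR (dim mu) * INR (dim_skew lam mu) / INR (dim lam))
  else 0.

Definition sig_of (N : nat) (lam : list nat) : list Z :=
  map Z.of_nat (firstn N (lam ++ repeat 0%nat N)).

(* Main.v *)
Require Import Defs.
From Stdlib Require Import Reals Lra Lia ZArith Arith List.
From Coquelicot Require Import Coquelicot.
Import ListNotations.
Open Scope R_scope.

Open Scope R_scope.

Lemma stolz (a b : nat -> R) (L : R) :
  (forall n, 0 <= b n < b (S n)) ->
  (forall M, exists N, forall n, (N <= n)%nat -> M < b n) ->
  Un_cv (fun n => (a (S n) - a n) / (b (S n) - b n)) L ->
  Un_cv (fun n => a n / b n) L.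
Proof.
  intros Hb Hinf Hc eps Heps.
  destruct (Hc (eps/2)) as [n1 Hn1]; [lra|].
  assert (HT : forall m, Rabs (a (m + n1)%nat - a n1 - L * (b (m + n1)%nat - b n1))
                <= eps/2 * (b (m+n1)%nat - b n1)).
  { induction m as [|m IH].
    - simpl. replace (a n1 - a n1 - L * (b n1 - b n1)) with 0 by ring.
      rewrite Rabs_R0. lra.
    - replace (S m + n1)%nat with (S (m + n1)) by lia.
      specialize (Hn1 (m + n1)%nat ltac:(lia)). unfold Rdist in Hn1.
      specialize (Hb (m+n1)%nat).
      set (da := a (S (m+n1)) - a (m+n1)%nat) in *.
      set (db := b (S (m+n1)) - b (m+n1)%nat) in *.
      assert (Hdb : 0 < db) by (unfold db; lra).
      assert (Hq : Rabs (da - L * db) <= eps/2 * db).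
      { replace (da - L*db) with ((da/db - L) * db) by (field; lra).
        rewrite Rabs_mult, (Rabs_right db) by lra.
        apply Rmult_le_compat_r; lra. }
      replace (a (S (m + n1)) - a n1 - L * (b (S (m + n1)) - b n1)) with
        ((a (m + n1)%nat - a n1 - L * (b (m + n1)%nat - b n1)) + (da - L*db))
        by (unfold da, db; ring).
      eapply Rle_trans; [apply Rabs_triang|].
      replace (eps / 2 * (b (S (m + n1)) - b n1)) with
        (eps / 2 * (b (m + n1)%nat - b n1) + eps/2*db) by (unfold db; ring).
      lra. }
  set (c := Rabs (a n1 - L * b n1)).
  destruct (Hinf (2 * c / eps + 1)) as [n2 Hn2].
  exists (n1 + n2)%nat. intros n Hn.
  assert (Hbn : 2 * c / eps + 1 < b n) by (apply Hn2; lia).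
  assert (Hc0 : 0 <= c) by apply Rabs_pos.
  assert (Hpos : 0 < b n).
  { assert (0 <= 2 * c / eps) by (apply Rdiv_le_0_compat; lra). lra. }
  specialize (HT (n - n1)%nat). replace (n - n1 + n1)%nat with n in HT by lia.
  unfold Rdist.
  replace (a n / b n - L) with
    ((a n1 - L * b n1) / b n + (a n - a n1 - L * (b n - b n1)) / b n)
    by (field; lra).
  eapply Rle_lt_trans; [apply Rabs_triang|].
  rewrite !Rabs_div by lra. rewrite (Rabs_right (b n)) by lra.
  fold c.
  assert (H1 : c / b n < eps / 2).
  { apply (Rmult_lt_reg_r (b n)); [lra|]. unfold Rdiv. rewrite Rmult_assoc, Rinv_l by lra.
    assert (c * 2 < eps * b n).
    { assert (2 * c < eps * (2*c/eps + 1)).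
      { unfold Rdiv. rewrite Rmult_plus_distr_l.
        replace (eps * (2 * c * / eps)) with (2*c) by (field; lra). lra. }
      nra. } lra. }
  assert (Hb1 : 0 <= b n1) by apply Hb.
  assert (H2 : Rabs (a n - a n1 - L * (b n - b n1)) / b n <= eps / 2).
  { apply (Rmult_le_reg_r (b n)); [lra|]. unfold Rdiv. rewrite Rmult_assoc, Rinv_l by lra.
    assert (eps / 2 * (b n - b n1) <= eps * / 2 * b n) by nra. lra. }
  lra.
Qed.

Open Scope R_scope.

Lemma pow_lt_compat_l (x y : R) (n : nat) : 0 <= x < y -> (0 < n)%nat -> x ^ n < y ^ n.
Proof.
  intros [H0 H1] Hn. destruct n as [|n]; [lia|]. simpl.
  assert (x ^ n <= y ^ n) by (apply pow_incr; lra).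
  assert (0 < y ^ n) by (apply pow_lt; lra).
  assert (x * x ^ n <= x * y ^ n) by (apply Rmult_le_compat_l; lra).
  nra.
Qed.

Lemma lim_inv_n : is_lim_seq (fun n => / INR n) 0.
Proof.
  replace (Finite 0) with (Rbar_inv p_infty) by reflexivity.
  apply is_lim_seq_inv; [apply is_lim_seq_INR| discriminate].
Qed.

Lemma lim_Sn_n : is_lim_seq (fun n => INR (S n) / INR n) 1.
Proof.
  apply is_lim_seq_ext_loc with (fun n => 1 + / INR n).
  - exists 1%nat. intros n Hn. rewrite S_INR. field.
    apply not_0_INR. lia.
  - assert (H := is_lim_seq_plus' _ _ _ _ (is_lim_seq_const 1) lim_inv_n).
    rewrite Rplus_0_r in H. exact H.
Qed.

Lemma lim_diff_pow (e : nat) :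
  is_lim_seq (fun n => (INR (S n) ^ S e - INR n ^ S e) / INR n ^ e) (INR (S e)).
Proof.
  induction e as [|e IH].
  - apply is_lim_seq_ext with (fun _ => 1).
    + intros n. rewrite S_INR. cbn [pow]. field.
    + replace (INR 1) with 1 by reflexivity. apply is_lim_seq_const.
  - apply is_lim_seq_ext_loc with
      (fun n => INR (S n) / INR n * ((INR (S n) ^ S e - INR n ^ S e) / INR n ^ e) + 1).
    + exists 1%nat. intros n Hn.
      assert (INR n <> 0) by (apply not_0_INR; lia).
      rewrite S_INR. cbn [pow]. field. split; auto. apply pow_nonzero; auto.
    + replace (INR (S (S e))) with (1 * INR (S e) + 1) by (rewrite (S_INR (S e)); ring).
      apply is_lim_seq_plus'; [|apply is_lim_seq_const].
      apply is_lim_seq_mult'; [apply lim_Sn_n|apply IH].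
Qed.

Lemma stolz_pow (a s : nat -> R) (e : nat) (sig : R) :
  (forall n, a (S n) = a n + s n) ->
  is_lim_seq (fun n => s n / INR n ^ e) sig ->
  is_lim_seq (fun n => a n / INR n ^ S e) (sig / INR (S e)).
Proof.
  intros Ha Hs. apply is_lim_seq_Reals. apply stolz.
  - intros n. split.
    + apply pow_le, pos_INR.
    + apply pow_lt_compat_l; [|lia]. split; [apply pos_INR|]. apply lt_INR; lia.
  - intros M. destruct (archimed M) as [H1 _].
    exists (S (Z.to_nat (up M))). intros n Hn.
    assert (Hn1 : 1 <= INR n) by (apply (le_INR 1); lia).
    assert (INR n <= INR n ^ S e).
    { simpl. rewrite <- (Rmult_1_r (INR n)) at 1. apply Rmult_le_compat_l; [lra|].
      apply pow_R1_Rle; lra. }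
    assert (M < INR n).
    { destruct (Z_le_gt_dec (up M) 0).
      - assert (IZR (up M) <= 0) by (apply IZR_le; lia). lra.
      - assert (INR (Z.to_nat (up M)) = IZR (up M)).
        { rewrite INR_IZR_INZ. f_equal. lia. }
        assert (INR (Z.to_nat (up M)) <= INR n) by (apply le_INR; lia). lra. }
    lra.
  - apply is_lim_seq_Reals.
    apply is_lim_seq_ext_loc with
      (fun n => (s n / INR n ^ e) / ((INR (S n) ^ S e - INR n ^ S e) / INR n ^ e)).
    + exists 1%nat. intros n Hn. rewrite Ha.
      assert (INR n <> 0) by (apply not_0_INR; lia).
      assert (INR n ^ e <> 0) by (apply pow_nonzero; auto).
      assert (INR (S n) ^ S e - INR n ^ S e <> 0).
      { assert (INR n ^ S e < INR (S n) ^ S e); [|lra].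
        apply pow_lt_compat_l; [|lia]. split; [apply pos_INR|]. apply lt_INR; lia. }
      field. auto.
    + apply is_lim_seq_div'; [exact Hs| apply lim_diff_pow|].
      apply not_0_INR. lia.
Qed.

Open Scope R_scope.

Definition sumR (n : nat) (f : nat -> R) : R :=
  fold_right Rplus 0 (map f (seq 0 n)).

Lemma fold_plus_init (l : list R) c : fold_right Rplus c l = fold_right Rplus 0 l + c.
Proof. induction l; simpl; [ring| rewrite IHl; ring]. Qed.
Lemma fold_mult_init (l : list R) c : fold_right Rmult c l = fold_right Rmult 1 l * c.
Proof. induction l; simpl; [ring| rewrite IHl; ring]. Qed.

Lemma sumR_0 f : sumR 0 f = 0. Proof. reflexivity. Qed.
Lemma prodR_0 f : prodR 0 f = 1. Proof. reflexivity. Qed.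

Lemma sumR_S n f : sumR (S n) f = sumR n f + f n.
Proof.
  unfold sumR. rewrite seq_S, map_app, fold_right_app. simpl.
  rewrite fold_plus_init. f_equal. ring.
Qed.
Lemma prodR_S n f : prodR (S n) f = prodR n f * f n.
Proof.
  unfold prodR. rewrite seq_S, map_app, fold_right_app. simpl.
  rewrite fold_mult_init. f_equal. ring.
Qed.

Lemma sumR_ext n f g : (forall i, (i < n)%nat -> f i = g i) -> sumR n f = sumR n g.
Proof.
  induction n; intros H; [reflexivity|]. rewrite !sumR_S, IHn, H; auto.
Qed.
Lemma prodR_ext n f g : (forall i, (i < n)%nat -> f i = g i) -> prodR n f = prodR n g.
Proof.
  induction n; intros H; [reflexivity|]. rewrite !prodR_S, IHn, H; auto.
Qed.

Lemma sumR_plus n f g : sumR n (fun i => f i + g i) = sumR n f + sumR n g.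
Proof. induction n; [unfold sumR, prodR; simpl; ring|]. rewrite !sumR_S, IHn. ring. Qed.
Lemma sumR_scal n a f : sumR n (fun i => a * f i) = a * sumR n f.
Proof. induction n; [unfold sumR, prodR; simpl; ring|]. rewrite !sumR_S, IHn. ring. Qed.
Lemma sumR_const n a : sumR n (fun _ => a) = INR n * a.
Proof. induction n; [unfold sumR, prodR; simpl; ring|]. rewrite !sumR_S, IHn, S_INR. ring. Qed.
Lemma prodR_mult n f g : prodR n (fun i => f i * g i) = prodR n f * prodR n g.
Proof. induction n; [unfold sumR, prodR; simpl; ring|]. rewrite !prodR_S, IHn. ring. Qed.
Lemma prodR_const1 n : prodR n (fun _ => 1) = 1.
Proof. induction n; [reflexivity|]. rewrite prodR_S, IHn. ring. Qed.

Lemma prodR_pos n f : (forall i, (i < n)%nat -> 0 < f i) -> 0 < prodR n f.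
Proof.
  induction n; intros H; [unfold prodR; simpl; lra|]. rewrite prodR_S.
  apply Rmult_lt_0_compat; auto.
Qed.
Lemma prodR_nz n f : (forall i, (i < n)%nat -> f i <> 0) -> prodR n f <> 0.
Proof.
  induction n; intros H; [unfold prodR; simpl; lra|]. rewrite prodR_S.
  apply Rmult_integral_contrapositive_currified; auto.
Qed.
Lemma prodR_zero n f i : (i < n)%nat -> f i = 0 -> prodR n f = 0.
Proof.
  induction n; intros Hi H; [lia|]. rewrite prodR_S.
  destruct (Nat.eq_dec i n); [subst; rewrite H; ring|].
  rewrite IHn; [ring|lia|auto].
Qed.
Lemma prodR_update n f g i : (i < n)%nat -> f i <> 0 ->
  (forall t, (t < n)%nat -> t <> i -> g t = f t) ->
  prodR n g = prodR n f * (g i / f i).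
Proof.
  induction n; intros Hi Hf H; [lia|]. rewrite !prodR_S.
  destruct (Nat.eq_dec i n).
  - subst. rewrite (prodR_ext n g f). field; auto.
    intros t Ht. apply H; lia.
  - rewrite IHn by (auto; lia). rewrite (H n) by lia. ring.
Qed.

Definition Dist (k : nat) (l : nat -> R) := forall i j, (i < k)%nat -> (j < k)%nat -> i <> j -> l i <> l j.
Definition Pf (k : nat) (l : nat -> R) (i : nat) : R :=
  prodR k (fun j => if Nat.eq_dec j i then 1 else (l i - 1 - l j) / (l i - l j)).
Definition phi (k : nat) (l : nat -> R) (c : R) : R :=
  prodR k (fun j => (c - l j - 1) / (c - l j)).

Lemma Pf_S k l i : (i < k)%nat -> Pf (S k) l i = Pf k l i * ((l i - 1 - l k) / (l i - l k)).
Proof.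
  intros Hi. unfold Pf. rewrite prodR_S. destruct (Nat.eq_dec k i); [lia|]. reflexivity.
Qed.
Lemma Pf_last k l : Pf (S k) l k = phi k l (l k).
Proof.
  unfold Pf, phi. rewrite prodR_S. destruct (Nat.eq_dec k k); [|lia].
  rewrite Rmult_1_r. apply prodR_ext. intros j Hj.
  destruct (Nat.eq_dec j k); [lia|]. f_equal. ring.
Qed.
Lemma Dist_S k l : Dist (S k) l -> Dist k l.
Proof. intros H i j Hi Hj. apply H; lia. Qed.

Lemma Lag_PF k l c : Dist k l -> (forall j, (j < k)%nat -> c <> l j) ->
  1 + sumR k (fun i => Pf k l i / (l i - c)) = phi k l c.
Proof.
  revert c. induction k as [|k IH]; intros c HD Hc.
  - unfold phi, sumR, prodR; simpl; ring.
  - assert (HDk := Dist_S _ _ HD).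
    assert (Hk : forall j, (j < k)%nat -> l j <> l k) by (intros j Hj; apply HD; lia).
    assert (Hck : c <> l k) by (apply Hc; lia).
    rewrite sumR_S, Pf_last.
    rewrite (sumR_ext k _ (fun i => (1 - 1/(c - l k)) * (Pf k l i / (l i - c))
                                 + (1/(c - l k)) * (Pf k l i / (l i - l k)))).
    2:{ intros i Hi. rewrite Pf_S by lia.
        assert (c <> l i) by (apply Hc; lia). specialize (Hk i Hi).
        field. repeat split; lra. }
    rewrite sumR_plus, !sumR_scal.
    assert (E1 := IH c HDk (fun j Hj => Hc j ltac:(lia))).
    assert (E2 := IH (l k) HDk (fun j Hj => not_eq_sym (Hk j Hj))).
    unfold phi at 2. rewrite prodR_S. fold (phi k l c).
    replace (sumR k (fun i => Pf k l i / (l i - c))) with (phi k l c - 1) by lra.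
    replace (sumR k (fun i => Pf k l i / (l i - l k))) with (phi k l (l k) - 1) by lra.
    field. lra.
Qed.

Lemma Lag_A k l : Dist k l -> sumR k (Pf k l) = INR k.
Proof.
  induction k as [|k IH]; intros HD; [reflexivity|].
  assert (HDk := Dist_S _ _ HD).
  assert (Hk : forall j, (j < k)%nat -> l j <> l k) by (intros j Hj; apply HD; lia).
  rewrite sumR_S, Pf_last.
  rewrite (sumR_ext k _ (fun i => Pf k l i + (-1) * (Pf k l i / (l i - l k)))).
  2:{ intros i Hi. rewrite Pf_S by lia. specialize (Hk i Hi). field. lra. }
  rewrite sumR_plus, sumR_scal, IH by auto.
  assert (E2 := Lag_PF k l (l k) HDk (fun j Hj => not_eq_sym (Hk j Hj))).
  rewrite S_INR. lra.
Qed.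

Lemma Lag_B k l : Dist k l ->
  sumR k (fun i => l i * Pf k l i) = sumR k l - INR k * (INR k - 1) / 2.
Proof.
  induction k as [|k IH]; intros HD; [unfold sumR; simpl; lra|].
  assert (HDk := Dist_S _ _ HD).
  assert (Hk : forall j, (j < k)%nat -> l j <> l k) by (intros j Hj; apply HD; lia).
  rewrite !sumR_S, Pf_last.
  rewrite (sumR_ext k _ (fun i => (l i * Pf k l i + (-1) * Pf k l i) + (- l k) * (Pf k l i / (l i - l k)))).
  2:{ intros i Hi. rewrite Pf_S by lia. specialize (Hk i Hi). field. lra. }
  rewrite !sumR_plus, !sumR_scal, IH, Lag_A by auto.
  assert (E2 := Lag_PF k l (l k) HDk (fun j Hj => not_eq_sym (Hk j Hj))).
  rewrite S_INR. replace (sumR k (fun i => Pf k l i / (l i - l k))) with (phi k l (l k) - 1) by lra. field.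
Qed.

Open Scope R_scope.

Lemma sumR_shift n f : sumR (S n) f = f 0%nat + sumR n (fun i => f (S i)).
Proof.
  induction n. { unfold sumR; simpl; ring. }
  rewrite sumR_S, IHn, sumR_S. ring.
Qed.
Lemma sumR_update n f g i : (i < n)%nat ->
  (forall t, (t < n)%nat -> t <> i -> g t = f t) ->
  sumR n g = sumR n f + (g i - f i).
Proof.
  induction n; intros Hi H; [lia|]. rewrite !sumR_S.
  destruct (Nat.eq_dec i n).
  - subst. rewrite (sumR_ext n g f). ring. intros t Ht. apply H; lia.
  - rewrite IHn by (auto; lia). rewrite (H n) by lia. ring.
Qed.
Lemma sumR_INR k : sumR k INR = INR k * (INR k - 1) / 2.
Proof. induction k. { unfold sumR; simpl; lra. } rewrite sumR_S, IHk, S_INR. field. Qed.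

Lemma INR_list_sum_map {A} (g : A -> nat) L :
  INR (list_sum (map g L)) = fold_right Rplus 0 (map (fun a => INR (g a)) L).
Proof. induction L; simpl; [reflexivity|]. rewrite plus_INR, IHL. reflexivity. Qed.

Lemma INR_list_sum_seq (g : nat -> nat) k :
  INR (list_sum (map g (seq 0 k))) = sumR k (fun i => INR (g i)).
Proof. rewrite INR_list_sum_map. reflexivity. Qed.

Lemma INR_size (x : list nat) : INR (size x) = sumR (length x) (fun i => INR (nth i x 0%nat)).
Proof.
  unfold size. induction x as [|a x IH]; [reflexivity|].
  simpl length. rewrite sumR_shift. simpl list_sum. rewrite plus_INR, IH. reflexivity.
Qed.

Lemma length_dec_row x i : (i < length x)%nat -> length (dec_row x i) = length x.
Proof.
  intros Hi. unfold dec_row. rewrite length_app, firstn_length_le by lia.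
  cbn [length]. rewrite length_skipn. lia.
Qed.

Lemma nth_dec_row x i j : (i < length x)%nat ->
  nth j (dec_row x i) 0%nat = if Nat.eq_dec j i then (nth i x 0%nat - 1)%nat%nat else nth j x 0%nat.
Proof.
  intros Hi. unfold dec_row.
  assert (Hl : length (firstn i x) = i) by (apply firstn_length_le; lia).
  destruct (Nat.eq_dec j i) as [->|Hne].
  - rewrite <- Hl at 1. rewrite nth_middle. reflexivity.
  - destruct (Nat.lt_ge_cases j i).
    + rewrite app_nth1 by lia. rewrite nth_firstn.
      destruct (Nat.ltb_spec j i); [reflexivity|lia].
    + rewrite app_nth2 by lia. rewrite Hl.
      destruct (j - i)%nat eqn:E; [lia|]. cbn [nth]. rewrite nth_skipn. f_equal. lia.
Qed.

Definition Vf (k : nat) (l : nat -> R) : R :=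
  prodR k (fun j => prodR j (fun i => (l i - l j) / (INR j - INR i))).

Lemma Vf_ext k l l2 : (forall j, (j < k)%nat -> l j = l2 j) -> Vf k l = Vf k l2.
Proof.
  intros H. unfold Vf. apply prodR_ext. intros j Hj. apply prodR_ext. intros i Hi.
  rewrite !H by lia. reflexivity.
Qed.

Definition upd (l : nat -> R) (i : nat) : nat -> R :=
  fun j => if Nat.eq_dec j i then l i - 1 else l j.

Lemma Vf_update k l i : (i < k)%nat -> Dist k l ->
  Vf k (upd l i) = Vf k l * Pf k l i.
Proof.
  induction k as [|k IH]; intros Hi HD; [lia|].
  assert (HDk := Dist_S _ _ HD).
  unfold Vf. rewrite !prodR_S. fold (Vf k (upd l i)). fold (Vf k l).
  destruct (Nat.eq_dec i k) as [->|Hne].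
  - rewrite (Vf_ext k (upd l k) l).
    2:{ intros j Hj. unfold upd. destruct (Nat.eq_dec j k); [lia|reflexivity]. }
    unfold Pf. rewrite prodR_S. destruct (Nat.eq_dec k k); [|lia].
    rewrite (prodR_ext k (fun i0 => (upd l k i0 - upd l k k) / (INR k - INR i0))
       (fun i0 => (l i0 - l k) / (INR k - INR i0) *
          (if Nat.eq_dec i0 k then 1 else (l k - 1 - l i0) / (l k - l i0)))).
    2:{ intros j Hj. unfold upd. destruct (Nat.eq_dec j k); [lia|].
        destruct (Nat.eq_dec k k); [|lia].
        assert (l j <> l k) by (apply HD; lia).
        assert (INR k - INR j <> 0).
        { assert (INR j < INR k) by (apply lt_INR; lia). lra. }
        field. split; lra. }
    rewrite prodR_mult. ring.
  - rewrite IH by (auto; lia).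
    rewrite Pf_S by lia.
    rewrite (prodR_update k (fun i0 => (l i0 - l k) / (INR k - INR i0))
             (fun i0 => (upd l i i0 - upd l i k) / (INR k - INR i0)) i).
    + unfold upd. destruct (Nat.eq_dec i i); [|lia]. destruct (Nat.eq_dec k i); [lia|].
      assert (l i <> l k) by (apply HD; lia).
      assert (INR k - INR i <> 0).
      { assert (INR i < INR k) by (apply lt_INR; lia). lra. }
      field. split; lra.
    + lia.
    + assert (l i <> l k) by (apply HD; lia).
      assert (INR i < INR k) by (apply lt_INR; lia).
      unfold Rdiv. apply Rmult_integral_contrapositive_currified; [lra|].
      apply Rinv_neq_0_compat. lra.
    + intros t Ht Hti. unfold upd. destruct (Nat.eq_dec t i); [lia|].
      destruct (Nat.eq_dec k i); [lia|]. reflexivity.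
Qed.

Definition nonincr (x : list nat) := forall i, (nth (S i) x 0 <= nth i x 0%nat)%nat.
Definition lv (x : list nat) : nat -> R := fun j => INR (nth j x 0%nat) - INR j.
Definition Rk (k i v : nat) : R := prodR v (fun s => INR k - INR i + INR s).
Definition Gx (x : list nat) : R :=
  Vf (length x) (lv x) / prodR (length x) (fun i => Rk (length x) i (nth i x 0%nat)).

Lemma Rk_pos k i v : (i < k)%nat -> 0 < Rk k i v.
Proof.
  intros H. unfold Rk. apply prodR_pos. intros s _.
  assert (INR i < INR k) by (apply lt_INR; lia). assert (0 <= INR s) by apply pos_INR. lra.
Qed.

Lemma lv_dist x : nonincr x -> Dist (length x) (lv x).
Proof.
  intros Hx.
  assert (Hmono : forall i j, (i <= j)%nat -> (nth j x 0 <= nth i x 0%nat)%nat).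
  { intros i j Hij. induction Hij; [lia|]. specialize (Hx m). lia. }
  intros i j Hi Hj Hne. unfold lv.
  destruct (Nat.lt_ge_cases i j).
  - assert (nth j x 0 <= nth i x 0%nat)%nat by (apply Hmono; lia).
    assert (INR (nth j x 0%nat) <= INR (nth i x 0%nat)) by (apply le_INR; lia).
    assert (INR i < INR j) by (apply lt_INR; lia). lra.
  - assert (nth i x 0 <= nth j x 0%nat)%nat by (apply Hmono; lia).
    assert (INR (nth i x 0%nat) <= INR (nth j x 0%nat)) by (apply le_INR; lia).
    assert (INR j < INR i) by (apply lt_INR; lia). lra.
Qed.

Lemma Vf_pos x : nonincr x -> 0 < Vf (length x) (lv x).
Proof.
  intros Hx.
  assert (Hmono : forall i j, (i <= j)%nat -> (nth j x 0 <= nth i x 0%nat)%nat).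
  { intros i j Hij. induction Hij; [lia|]. specialize (Hx m). lia. }
  unfold Vf. apply prodR_pos. intros j Hj. apply prodR_pos. intros i Hi. unfold lv.
  assert (nth j x 0 <= nth i x 0%nat)%nat by (apply Hmono; lia).
  assert (INR (nth j x 0%nat) <= INR (nth i x 0%nat)) by (apply le_INR; lia).
  assert (INR i < INR j) by (apply lt_INR; lia).
  apply Rdiv_lt_0_compat; lra.
Qed.

Lemma Gx_pos x : nonincr x -> 0 < Gx x.
Proof.
  intros Hx. unfold Gx. apply Rdiv_lt_0_compat. apply Vf_pos; auto.
  apply prodR_pos. intros i Hi. apply Rk_pos; auto.
Qed.

Lemma Gx_dec x i : nonincr x -> (i < length x)%nat -> (1 <= nth i x 0%nat)%nat ->
  Gx (dec_row x i) =
  Gx x * ((INR (nth i x 0%nat) + INR (length x) - 1 - INR i) * Pf (length x) (lv x) i).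
Proof.
  intros Hx Hi Hxi. unfold Gx. rewrite length_dec_row by auto.
  set (k := length x) in *.
  rewrite (Vf_ext k (lv (dec_row x i)) (upd (lv x) i)).
  2:{ intros j Hj. unfold lv, upd. rewrite nth_dec_row by auto.
      destruct (Nat.eq_dec j i) as [->|]; [|reflexivity].
      rewrite minus_INR by lia. simpl. ring. }
  rewrite Vf_update by (auto; apply lv_dist; auto).
  rewrite (prodR_update k (fun i0 => Rk k i0 (nth i0 x 0%nat))
           (fun i0 => Rk k i0 (nth i0 (dec_row x i) 0%nat)) i).
  - rewrite nth_dec_row by auto. destruct (Nat.eq_dec i i); [|lia].
    replace (nth i x 0%nat) with (S (nth i x 0%nat - 1)%nat) at 2 by lia.
    replace (Rk k i (S (nth i x 0%nat - 1))) with (Rk k i (nth i x 0%nat - 1) * (INR k - INR i + INR (nth i x 0%nat - 1))) by (unfold Rk; rewrite prodR_S; reflexivity).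
    assert (H1 : 0 < Rk k i (nth i x 0%nat - 1)%nat) by (apply Rk_pos; auto).
    assert (H2 : 0 < prodR k (fun i0 => Rk k i0 (nth i0 x 0%nat))).
    { apply prodR_pos. intros; apply Rk_pos; auto. }
    rewrite minus_INR by lia.
    assert (INR i < INR k) by (apply lt_INR; lia).
    assert (1 <= INR (nth i x 0%nat)) by (apply (le_INR 1); lia).
    simpl (INR 1). field. repeat split; lra.
  - auto.
  - apply Rgt_not_eq, Rk_pos; auto.
  - intros t Ht Hti. rewrite nth_dec_row by auto. destruct (Nat.eq_dec t i); [lia|reflexivity].
Qed.

Lemma size_dec_row x i : (i < length x)%nat -> (1 <= nth i x 0%nat)%nat ->
  S (size (dec_row x i)) = size x.
Proof.
  intros Hi H1. apply INR_eq. rewrite S_INR, !INR_size, length_dec_row by auto.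
  rewrite (sumR_update (length x) (fun i0 => INR (nth i0 x 0%nat))
      (fun i0 => INR (nth i0 (dec_row x i) 0%nat)) i Hi).
  - rewrite nth_dec_row by auto. destruct (Nat.eq_dec i i); [|lia].
    rewrite minus_INR by lia. simpl. ring.
  - intros t Ht Hti. rewrite nth_dec_row by auto. destruct (Nat.eq_dec t i); [lia|reflexivity].
Qed.

Lemma nonincr_dec_row x i : nonincr x -> (i < length x)%nat ->
  (nth (S i) x 0 < nth i x 0%nat)%nat -> nonincr (dec_row x i).
Proof.
  intros Hx Hi Hc j. rewrite !nth_dec_row by auto.
  specialize (Hx j).
  destruct (Nat.eq_dec (S j) i); destruct (Nat.eq_dec j i); subst; try lia.
Qed.

Lemma Vf_zero k : Vf k (fun j => - INR j) = 1.
Proof.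
  unfold Vf. rewrite (prodR_ext k _ (fun _ => 1)); [apply prodR_const1|].
  intros j Hj. rewrite (prodR_ext j _ (fun _ => 1)); [apply prodR_const1|].
  intros i Hi. assert (INR i < INR j) by (apply lt_INR; lia). field. lra.
Qed.

Lemma list_sum_zero x : list_sum x = 0%nat -> forall i, nth i x 0%nat = 0%nat.
Proof.
  induction x as [|a x IH]; intros H i; [destruct i; reflexivity|].
  simpl in H. destruct i; simpl; [lia|]. apply IH. lia.
Qed.

Lemma sum_wPf x : nonincr x ->
  sumR (length x) (fun i => (INR (nth i x 0%nat) + INR (length x) - 1 - INR i) * Pf (length x) (lv x) i)
  = INR (size x).
Proof.
  intros Hx. set (k := length x).
  assert (HD : Dist k (lv x)) by (apply lv_dist; auto).
  rewrite (sumR_ext k _ (fun i => lv x i * Pf k (lv x) i + (INR k - 1) * Pf k (lv x) i)).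
  2:{ intros i Hi. unfold lv. ring. }
  rewrite sumR_plus, sumR_scal, Lag_B, Lag_A by auto.
  rewrite INR_size. fold k.
  unfold lv. rewrite (sumR_ext k _ (fun i => INR (nth i x 0%nat) + (-1) * INR i)) by (intros; ring).
  rewrite sumR_plus, sumR_scal.
  replace (sumR k (fun i => INR i)) with (sumR k INR) by reflexivity.
  rewrite sumR_INR. field.
Qed.

Lemma wPf_zero x i : (i < length x)%nat -> nth (S i) x 0%nat = nth i x 0%nat ->
  (INR (nth i x 0%nat) + INR (length x) - 1 - INR i) * Pf (length x) (lv x) i = 0.
Proof.
  intros Hi Heq. destruct (Nat.eq_dec (S i) (length x)) as [E|E].
  - rewrite (nth_overflow x) in Heq by lia. rewrite <- Heq.
    rewrite <- E, S_INR. simpl. ring.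
  - rewrite (Rmult_comm _ (Pf _ _ _)). unfold Pf.
    rewrite (prodR_zero _ _ (S i)); [ring|lia|].
    destruct (Nat.eq_dec (S i) i); [lia|]. unfold lv. rewrite Heq, S_INR.
    unfold Rdiv. replace (INR (nth i x 0%nat) - INR i - 1 - (INR (nth i x 0%nat) - (INR i + 1))) with 0 by ring.
    ring.
Qed.

Lemma dim_formula d : forall x, nonincr x -> size x = d ->
  INR (skew_count d x []) = INR (fact d) * Gx x.
Proof.
  induction d as [|d IH]; intros x Hx Hs.
  - assert (Hz := list_sum_zero x Hs).
    cbn [skew_count]. replace (containedb [] x) with true by reflexivity.
    unfold Gx. rewrite (Vf_ext _ (lv x) (fun j => - INR j)).
    2:{ intros j _. unfold lv. rewrite Hz. simpl. ring. }
    rewrite Vf_zero.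
    rewrite (prodR_ext _ _ (fun _ => 1)).
    2:{ intros i _. rewrite Hz. reflexivity. }
    rewrite prodR_const1. simpl. field.
  - cbn [skew_count]. rewrite INR_list_sum_seq.
    set (k := length x).
    rewrite (sumR_ext k _ (fun i => INR (fact d) * Gx x *
      ((INR (nth i x 0%nat) + INR k - 1 - INR i) * Pf k (lv x) i))).
    2:{ intros i Hi.
        assert (Hnth : forall j, nth j [] 0%nat = 0%nat) by (intros [|j]; reflexivity).
        rewrite Hnth.
        destruct (Nat.ltb_spec (nth (S i) x 0%nat) (nth i x 0%nat));
        destruct (Nat.ltb_spec 0 (nth i x 0%nat)); simpl andb; cbv iota.
        - rewrite IH.
          + rewrite Gx_dec by (auto; lia). fold k. ring.
          + apply nonincr_dec_row; auto.
          + assert (Hsz := size_dec_row x i Hi ltac:(lia)). lia.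
        - lia.
        - assert (Heq : nth (S i) x 0%nat = nth i x 0%nat) by (specialize (Hx i); lia).
          rewrite wPf_zero by auto. simpl. ring.
        - assert (Heq : nth (S i) x 0%nat = nth i x 0%nat) by (specialize (Hx i); lia).
          rewrite wPf_zero by auto. simpl. ring. }
    rewrite sumR_scal. unfold k. rewrite sum_wPf, Hs by auto.
    rewrite fact_simpl, mult_INR. ring.
Qed.

Open Scope R_scope.

Lemma prodR_shift n f : prodR (S n) f = f 0%nat * prodR n (fun i => f (S i)).
Proof.
  induction n. { unfold prodR; simpl; ring. }
  rewrite prodR_S, IHn, prodR_S. ring.
Qed.
Lemma prodR_add k t f : prodR (k + t) f = prodR k f * prodR t (fun s => f (k + s)%nat).
Proof.
  induction t. { rewrite Nat.add_0_r. unfold prodR at 3. simpl. ring. }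
  rewrite Nat.add_succ_r, !prodR_S, IHt. ring.
Qed.
Lemma prodR_swap m k F : prodR m (fun t => prodR k (fun i => F i t)) =
                         prodR k (fun i => prodR m (fun t => F i t)).
Proof.
  induction m. { simpl. rewrite prodR_0. symmetry. apply prodR_const1. }
  rewrite prodR_S, IHm, <- prodR_mult. apply prodR_ext. intros i _. rewrite prodR_S. reflexivity.
Qed.

Lemma prod_shift1 v b : prodR v (fun s => b + 1 + INR s) * b = prodR v (fun s => b + INR s) * (b + INR v).
Proof.
  induction v. { unfold prodR; simpl; ring. }
  rewrite !prodR_S. rewrite S_INR.
  replace (prodR v (fun s => b + 1 + INR s) * (b + 1 + INR v) * b) with
    ((prodR v (fun s => b + 1 + INR s) * b) * (b + 1 + INR v)) by ring.
  rewrite IHv. ring.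
Qed.

Lemma prod_tele v a m : 0 < a ->
  prodR m (fun t => (INR v + a + INR t) / (a + INR t)) =
  prodR v (fun s => a + INR m + INR s) / prodR v (fun s => a + INR s).
Proof.
  intros Ha.
  assert (Hp : forall b, 0 < b -> 0 < prodR v (fun s => b + INR s)).
  { intros b Hb. apply prodR_pos. intros s _. assert (0 <= INR s) by apply pos_INR. lra. }
  induction m.
  - rewrite prodR_0. simpl. rewrite Rplus_0_r. field. apply Rgt_not_eq, Hp; auto.
  - rewrite prodR_S, IHm. rewrite S_INR.
    assert (0 <= INR m) by apply pos_INR.
    assert (E := prod_shift1 v (a + INR m)).
    replace (prodR v (fun s => a + (INR m + 1) + INR s)) with
      (prodR v (fun s => a + INR m + 1 + INR s)) by (apply prodR_ext; intros; ring).
    assert (0 < prodR v (fun s => a + INR s)) by (apply Hp; auto).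
    assert (0 < prodR v (fun s => a + INR m + INR s)) by (apply Hp; lra).
    replace (prodR v (fun s => a + INR m + 1 + INR s)) with
      (prodR v (fun s => a + INR m + INR s) * (a + INR m + INR v) / (a + INR m)).
    2:{ rewrite <- E. field. lra. }
    field. lra.
Qed.

Lemma Vf_big (x : list nat) N : (length x <= N)%nat ->
  Vf N (lv x) = Vf (length x) (lv x) *
    prodR (length x) (fun i => prodR (nth i x 0%nat) (fun s => INR N - INR i + INR s)
                                / Rk (length x) i (nth i x 0%nat)).
Proof.
  intros HN. set (k := length x).
  replace N with (k + (N - k))%nat at 1 by lia.
  unfold Vf at 1. rewrite prodR_add. fold (Vf k (lv x)). f_equal.
  rewrite (prodR_ext (N - k) _ (fun t => prodR k (fun i =>
            (INR (nth i x 0%nat) + (INR k - INR i) + INR t) / ((INR k - INR i) + INR t)))).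
  2:{ intros t Ht. rewrite prodR_add.
      rewrite (prodR_ext t (fun s => _) (fun _ => 1)).
      2:{ intros s Hs. unfold lv. rewrite !nth_overflow by (unfold k; lia).
          rewrite !plus_INR. assert (INR s < INR t) by (apply lt_INR; lia). field. lra. }
      rewrite prodR_const1, Rmult_1_r. apply prodR_ext. intros i Hi. unfold lv.
      rewrite (@nth_overflow _ x (k+t)%nat) by (unfold k; lia). rewrite plus_INR. simpl (INR 0). f_equal; ring. }
  rewrite prodR_swap. apply prodR_ext. intros i Hi.
  assert (Ha : 0 < INR k - INR i) by (assert (INR i < INR k) by (apply lt_INR; lia); lra).
  rewrite prod_tele by auto. unfold Rk. f_equal. apply prodR_ext. intros s _.
  rewrite minus_INR by (unfold k in *; lia). ring.
Qed.

Lemma nth_sig_of N x i : nth i (sig_of N x) 0%Z = if Nat.ltb i N then Z.of_nat (nth i x 0%nat) else 0%Z.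
Proof.
  unfold sig_of. replace 0%Z with (Z.of_nat 0) by reflexivity. rewrite map_nth.
  rewrite nth_firstn. destruct (Nat.ltb i N); [|reflexivity]. f_equal.
  destruct (Nat.lt_ge_cases i (length x)).
  - apply app_nth1; auto.
  - rewrite app_nth2 by auto. rewrite (@nth_overflow _ x i) by lia.
    rewrite nth_repeat. reflexivity.
Qed.

Lemma DimN_sig N x : DimN N (sig_of N x) = Vf N (lv x).
Proof.
  unfold DimN, Vf. apply prodR_ext. intros j Hj. apply prodR_ext. intros i Hi.
  rewrite !nth_sig_of. destruct (Nat.ltb_spec i N); [|lia]. destruct (Nat.ltb_spec j N); [|lia].
  rewrite minus_IZR, <- !INR_IZR_INZ. unfold lv. f_equal. ring.
Qed.

Lemma pow_size y (x : list nat) : y ^ size x = prodR (length x) (fun i => y ^ nth i x 0%nat).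
Proof.
  unfold size. induction x as [|a x IH]; [reflexivity|].
  simpl length. rewrite prodR_shift. simpl list_sum. rewrite pow_add, IH. reflexivity.
Qed.

Lemma prodR_div_pow v f y : y <> 0 -> prodR v f / y ^ v = prodR v (fun s => f s / y).
Proof.
  intros Hy. induction v. { unfold prodR; simpl; field. }
  rewrite !prodR_S, <- IHv. simpl. field. split; auto. apply pow_nonzero; auto.
Qed.

Lemma lim_prodR n (f : nat -> nat -> R) (L : nat -> R) :
  (forall i, (i < n)%nat -> is_lim_seq (fun N => f i N) (L i)) ->
  is_lim_seq (fun N => prodR n (fun i => f i N)) (prodR n L).
Proof.
  induction n; intros H.
  - rewrite prodR_0. apply is_lim_seq_ext with (fun _ => 1); [intros; reflexivity|apply is_lim_seq_const].
  - rewrite prodR_S. apply is_lim_seq_ext with (fun N => prodR n (fun i => f i N) * f n N).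
    { intros; rewrite prodR_S; reflexivity. }
    apply is_lim_seq_mult'; auto.
Qed.

Lemma lim_inv_n' : is_lim_seq (fun n => / INR n) 0.
Proof.
  replace (Finite 0) with (Rbar_inv p_infty) by reflexivity.
  apply is_lim_seq_inv; [apply is_lim_seq_INR| discriminate].
Qed.

Lemma lim_shift_ratio (c : R) : is_lim_seq (fun N => (INR N + c) / INR N) 1.
Proof.
  apply is_lim_seq_ext_loc with (fun N => 1 + c * / INR N).
  - exists 1%nat. intros n Hn. field. apply not_0_INR. lia.
  - assert (H := is_lim_seq_plus' _ _ _ _ (is_lim_seq_const 1)
                   (is_lim_seq_scal_l _ c _ lim_inv_n')).
    simpl in H. rewrite Rmult_0_r, Rplus_0_r in H. exact H.
Qed.

Lemma DimN_asym (x : list nat) : nonincr x ->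
  is_lim_seq (fun N => DimN N (sig_of N x) / INR N ^ size x) (Gx x).
Proof.
  intros Hx. set (k := length x).
  apply is_lim_seq_ext_loc with
    (fun N => Gx x * prodR k (fun i => prodR (nth i x 0%nat) (fun s => (INR N - INR i + INR s) / INR N))).
  - exists (S k). intros N HN. rewrite DimN_sig, Vf_big by (unfold k; lia).
    assert (HN0 : INR N <> 0) by (apply not_0_INR; lia).
    rewrite pow_size. fold k. unfold Gx. fold k.
    assert (Hd : 0 < prodR k (fun i => Rk k i (nth i x 0%nat))).
    { apply prodR_pos. intros; apply Rk_pos; auto. }
    assert (Hq : 0 < prodR k (fun i => INR N ^ nth i x 0%nat)).
    { apply prodR_pos. intros; apply pow_lt. assert (0 < INR N) by (apply lt_0_INR; lia). lra. }
    rewrite (prodR_ext k (fun i => prodR _ _) (fun i => (prodR (nth i x 0%nat) (fun s => INR N - INR i + INR s)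
        / INR N ^ nth i x 0%nat))).
    2:{ intros i Hi. rewrite prodR_div_pow; auto. }
    rewrite (prodR_ext k (fun i => _ / Rk k i _) (fun i => (prodR (nth i x 0%nat) (fun s => INR N - INR i + INR s)
        / INR N ^ nth i x 0%nat) * (INR N ^ nth i x 0%nat / Rk k i (nth i x 0%nat)))).
    2:{ intros i Hi. assert (0 < Rk k i (nth i x 0%nat)) by (apply Rk_pos; auto).
        assert (INR N ^ nth i x 0%nat <> 0) by (apply pow_nonzero; auto). field; lra. }
    rewrite prodR_mult.
    rewrite (prodR_ext k (fun i => INR N ^ _ / Rk k i _) (fun i => INR N ^ nth i x 0%nat * / Rk k i (nth i x 0%nat)))
      by (intros; reflexivity).
    rewrite prodR_mult.
    assert (Hinv : forall n (f : nat -> R), (forall i, (i < n)%nat -> f i <> 0) ->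
               prodR n (fun i => / f i) = / prodR n f).
    { induction n; intros f Hf. { unfold prodR; simpl; field. }
      rewrite !prodR_S, IHn by auto. field. split; [apply Hf; lia|]. apply prodR_nz. intros; apply Hf; lia. }
    rewrite Hinv by (intros; apply Rgt_not_eq, Rk_pos; auto).
    field. split; lra.
  - assert (H : is_lim_seq (fun N => prodR k (fun i => prodR (nth i x 0%nat) (fun s => (INR N - INR i + INR s) / INR N)))
        (prodR k (fun i => prodR (nth i x 0%nat) (fun _ => 1)))).
    { apply lim_prodR. intros i _. apply lim_prodR. intros s _.
      apply is_lim_seq_ext with (fun N => (INR N + (INR s - INR i)) / INR N).
      { intros; f_equal; ring. }
      apply lim_shift_ratio. }
    rewrite (prodR_ext k _ (fun _ => 1)) in H by (intros; apply prodR_const1).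
    rewrite prodR_const1 in H.
    assert (H2 := is_lim_seq_mult' _ _ _ _ (is_lim_seq_const (Gx x)) H).
    rewrite Rmult_1_r in H2. exact H2.
Qed.

Open Scope nat_scope.

Definition range (b a : nat) : list nat := map (Nat.add b) (seq 0 (S a - b)).

Fixpoint inat (x : list nat) : list (list nat) :=
  match x with
  | [] => [[]]
  | a :: rest => flat_map (fun y => map (cons y) (inat rest)) (range (hd 0 rest) a)
  end.

Lemma in_range y b a : In y (range b a) <-> b <= y <= a.
Proof.
  unfold range. rewrite in_map_iff. split.
  - intros [t [<- Ht]]. apply in_seq in Ht. lia.
  - intros H. exists (y - b). split; [lia|]. apply in_seq. lia.
Qed.

Lemma Zrange_nat b a : Zrange (Z.of_nat b) (Z.of_nat a) = map Z.of_nat (range b a).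
Proof.
  unfold Zrange, range. rewrite map_map.
  replace (Z.to_nat (Z.of_nat a - Z.of_nat b + 1)) with (S a - b).
  - apply map_ext. intros t. lia.
  - destruct (le_lt_dec b a).
    + replace (Z.of_nat a - Z.of_nat b + 1)%Z with (Z.of_nat (S a - b)) by lia.
      rewrite Nat2Z.id. reflexivity.
    + lia.
Qed.

Lemma interl_zeros m : interl (map Z.of_nat (repeat 0 (S m))) = [map Z.of_nat (repeat 0 m)].
Proof.
  induction m. { reflexivity. }
  transitivity (flat_map (fun x => map (cons x) (interl (map Z.of_nat (repeat 0 (S m))))) (Zrange 0 0)).
  { reflexivity. }
  rewrite IHm. reflexivity.
Qed.

Lemma interl_cons a b L : interl (a :: b :: L) =
  flat_map (fun x => map (cons x) (interl (b :: L))) (Zrange b a).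
Proof. reflexivity. Qed.

Lemma flat_map_map_l {A B C} (g : B -> list C) (h : A -> B) l :
  flat_map g (map h l) = flat_map (fun a => g (h a)) l.
Proof. induction l; simpl; [reflexivity|]. rewrite IHl. reflexivity. Qed.
Lemma map_flat_map {A B C} (f : B -> C) (G : A -> list B) l :
  map f (flat_map G l) = flat_map (fun a => map f (G a)) l.
Proof. induction l; simpl; [reflexivity|]. rewrite map_app, IHl. reflexivity. Qed.

Lemma interl_sig x m : interl (map Z.of_nat (x ++ repeat 0 (S m))) =
  map (fun y => map Z.of_nat (y ++ repeat 0 m)) (inat x).
Proof.
  induction x as [|a rest IH].
  - exact (interl_zeros m).
  - assert (Ht : map Z.of_nat (rest ++ repeat 0 (S m)) =
                 Z.of_nat (hd 0 rest) :: tl (map Z.of_nat (rest ++ repeat 0 (S m)))).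
    { destruct rest; reflexivity. }
    change (map Z.of_nat ((a :: rest) ++ repeat 0 (S m))) with
      (Z.of_nat a :: map Z.of_nat (rest ++ repeat 0 (S m))).
    rewrite Ht, interl_cons, <- Ht, IH, Zrange_nat.
    cbn [inat]. rewrite map_flat_map, flat_map_map_l.
    apply flat_map_ext. intros y. rewrite !map_map. reflexivity.
Qed.

Lemma inat_length x y : In y (inat x) -> length y = length x.
Proof.
  revert y. induction x as [|a rest IH]; intros y Hy.
  - simpl in Hy. destruct Hy as [<-|[]]. reflexivity.
  - simpl in Hy. apply in_flat_map in Hy. destruct Hy as [y0 [_ Hy]].
    apply in_map_iff in Hy. destruct Hy as [y' [<- Hy']]. simpl. f_equal. auto.
Qed.

Lemma inat_bounds x y : In y (inat x) -> forall i, nth (S i) x 0 <= nth i y 0 <= nth i x 0.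
Proof.
  revert y. induction x as [|a rest IH]; intros y Hy i.
  - simpl in Hy. destruct Hy as [<-|[]]. destruct i; simpl; lia.
  - simpl in Hy. apply in_flat_map in Hy. destruct Hy as [y0 [Hr Hy]].
    apply in_range in Hr.
    apply in_map_iff in Hy. destruct Hy as [y' [<- Hy']].
    destruct i.
    + simpl. destruct rest; simpl in *; lia.
    + simpl. apply IH; auto.
Qed.

Lemma firstn_repeat' {A} (a : A) n m : n <= m -> firstn n (repeat a m) = repeat a n.
Proof.
  revert m. induction n; intros m H; [reflexivity|].
  destruct m; [lia|]. simpl. f_equal. apply IHn. lia.
Qed.

Lemma sig_of_eq N x : length x <= N -> sig_of N x = map Z.of_nat (x ++ repeat 0 (N - length x)).
Proof.
  intros H. unfold sig_of. f_equal. rewrite firstn_app, firstn_all2 by auto.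
  f_equal. apply firstn_repeat'. lia.
Qed.

Lemma map_Z_inj l1 l2 : map Z.of_nat l1 = map Z.of_nat l2 -> l1 = l2.
Proof.
  revert l2. induction l1 as [|a l1 IH]; intros [|b l2] H; simpl in H; try discriminate; auto.
  injection H as H1 H2. f_equal; [lia|auto].
Qed.

Fixpoint bc (t : list nat) (D : nat) (x : list nat) : nat :=
  match D with
  | O => if list_eq_dec Nat.eq_dec x t then 1 else 0
  | S D' => list_sum (map (bc t D') (inat x))
  end.

Lemma chains_bc (mu : list nat) K : length mu <= K ->
  forall D x N, length x = K -> K <= N ->
  chains_count (sig_of N mu) D (sig_of (N + D) x) = bc (mu ++ repeat 0 (K - length mu)) D x.
Proof.
  intros Hmu. set (t := mu ++ repeat 0 (K - length mu)).
  assert (Hlt : length t = K) by (unfold t; rewrite length_app, repeat_length; lia).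
  intros D. induction D as [|D IH]; intros x N Hx HN.
  - rewrite Nat.add_0_r.
    assert (Hk : sig_of N mu = map Z.of_nat (t ++ repeat 0 (N - K))).
    { rewrite sig_of_eq by lia. unfold t. rewrite <- app_assoc, <- repeat_app. do 3 f_equal. lia. }
    rewrite Hk, (sig_of_eq N x) by lia. rewrite Hx. simpl.
    destruct (list_eq_dec Z.eq_dec _ _) as [E|E]; destruct (list_eq_dec Nat.eq_dec x t) as [E2|E2]; auto.
    + apply map_Z_inj in E. apply app_inv_tail in E. congruence.
    + exfalso. apply E. congruence.
  - cbn [chains_count bc].
    rewrite (sig_of_eq (N + S D) x) by lia.
    replace (N + S D - length x) with (S (N + D - K)) by lia.
    rewrite interl_sig, map_map. f_equal. apply map_ext_in. intros y Hy.
    assert (Hly : length y = K) by (rewrite (inat_length x y Hy); auto).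
    rewrite <- (IH y N Hly HN). f_equal. rewrite sig_of_eq by lia. rewrite Hly. reflexivity.
Qed.

Open Scope R_scope.

Definition sR (L : list (list nat)) (F : list nat -> R) : R := fold_right Rplus 0 (map F L).

Lemma sR_app L1 L2 F : sR (L1 ++ L2) F = sR L1 F + sR L2 F.
Proof. induction L1; unfold sR in *; simpl; [ring|]. rewrite IHL1. ring. Qed.
Lemma sR_map h L F : sR (map h L) F = sR L (fun y => F (h y)).
Proof. unfold sR. rewrite map_map. reflexivity. Qed.
Lemma sR_flat_map {A} (G : A -> list (list nat)) l F :
  sR (flat_map G l) F = fold_right Rplus 0 (map (fun a => sR (G a) F) l).
Proof. induction l; simpl; [reflexivity|]. rewrite sR_app, IHl. reflexivity. Qed.
Lemma sR_ext_in L F G : (forall y, In y L -> F y = G y) -> sR L F = sR L G.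
Proof. intros H. unfold sR. f_equal. apply map_ext_in. auto. Qed.
Lemma sR_plus L F G : sR L (fun y => F y + G y) = sR L F + sR L G.
Proof. induction L; unfold sR in *; simpl; [ring|]. rewrite IHL. ring. Qed.
Lemma sR_zero L F : (forall y, In y L -> F y = 0) -> sR L F = 0.
Proof.
  induction L; intros H; unfold sR in *; simpl; [reflexivity|].
  rewrite H by (left; auto). rewrite IHL by (intros; apply H; right; auto). ring.
Qed.
Lemma sR_div L F c : sR L (fun y => F y / c) = sR L F / c.
Proof. induction L; unfold sR in *; simpl; [unfold Rdiv; ring|]. rewrite IHL. unfold Rdiv. ring. Qed.
Lemma fold_zero {A} (l : list A) (G : A -> R) : (forall a, In a l -> G a = 0) ->
  fold_right Rplus 0 (map G l) = 0.
Proof.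
  induction l; intros H; simpl; [reflexivity|].
  rewrite H by (left; auto). rewrite IHl by (intros; apply H; right; auto). ring.
Qed.

Lemma lim_sR L (f : list nat -> nat -> R) (g : list nat -> R) :
  (forall y, In y L -> is_lim_seq (fun D => f y D) (g y)) ->
  is_lim_seq (fun D => sR L (fun y => f y D)) (sR L g).
Proof.
  induction L; intros H; unfold sR in *; simpl.
  - apply is_lim_seq_const.
  - apply is_lim_seq_plus'; [apply H; left; auto|]. apply IHL. intros; apply H; right; auto.
Qed.

Lemma size_cons a y : size (a :: y) = (a + size y)%nat.
Proof. reflexivity. Qed.

Lemma inat_size x y : In y (inat x) -> (size y <= size x)%nat.
Proof.
  revert y. induction x as [|a rest IH]; intros y Hy.
  - simpl in Hy. destruct Hy as [<-|[]]. reflexivity.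
  - simpl in Hy. apply in_flat_map in Hy. destruct Hy as [y0 [Hr Hy]].
    apply in_range in Hr.
    apply in_map_iff in Hy. destruct Hy as [y' [<- Hy']].
    rewrite !size_cons. specialize (IH y' Hy'). lia.
Qed.

Lemma nonincr_tl a rest : nonincr (a :: rest) -> nonincr rest.
Proof. intros H i. apply (H (S i)). Qed.
Lemma nonincr_hd a rest : nonincr (a :: rest) -> (hd 0 rest <= a)%nat.
Proof. intros H. specialize (H 0%nat). destruct rest; simpl in *; lia. Qed.

Lemma range_last b a : (b <= a)%nat -> range b a = map (Nat.add b) (seq 0 (a - b)) ++ [a].
Proof.
  intros H. unfold range. replace (S a - b)%nat with (S (a - b)) by lia.
  rewrite seq_S, map_app. simpl. do 3 f_equal. lia.
Qed.

Lemma L1 x : nonincr x -> forall F,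
  sR (inat x) (fun y => if Nat.eq_dec (size y) (size x) then F y else 0) = F x.
Proof.
  induction x as [|a rest IH]; intros Hx F.
  - unfold sR; simpl. destruct (Nat.eq_dec 0 0); [ring|lia].
  - cbn [inat]. rewrite sR_flat_map.
    assert (Hb := nonincr_hd _ _ Hx).
    rewrite range_last by auto. rewrite map_app, fold_right_app. simpl fold_right at 1.
    rewrite fold_plus_init.
    rewrite fold_zero.
    2:{ intros y0 Hy0. apply in_map_iff in Hy0. destruct Hy0 as [t [<- Ht]]. apply in_seq in Ht.
        rewrite sR_map. apply sR_zero. intros y' Hy'.
        match goal with |- context [Nat.eq_dec ?p ?q] => destruct (Nat.eq_dec p q) as [E|]; [|reflexivity] end.
        rewrite !size_cons in E. assert (Hs := inat_size _ _ Hy'). lia. }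
    rewrite sR_map.
    rewrite (sR_ext_in _ _ (fun y' => if Nat.eq_dec (size y') (size rest) then F (a :: y') else 0)).
    2:{ intros y' _. rewrite !size_cons.
        destruct (Nat.eq_dec (a + size y') (a + size rest)); destruct (Nat.eq_dec (size y') (size rest)); try lia; reflexivity. }
    rewrite (IH (nonincr_tl _ _ Hx) (fun y' => F (a :: y'))). ring.
Qed.

Lemma dec_row_S a rest i : dec_row (a :: rest) (S i) = a :: dec_row rest i.
Proof. reflexivity. Qed.
Lemma dec_row_0 a rest : dec_row (a :: rest) 0 = (a - 1)%nat :: rest.
Proof. reflexivity. Qed.

Lemma L2 x : nonincr x -> forall F,
  sR (inat x) (fun y => if Nat.eq_dec (S (size y)) (size x) then F y else 0) =
  sumR (length x) (fun i => if Nat.ltb (nth (S i) x 0%nat) (nth i x 0%nat) then F (dec_row x i) else 0).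
Proof.
  induction x as [|a rest IH]; intros Hx F.
  - unfold sR, sumR; simpl. destruct (Nat.eq_dec 1 0); [lia|ring].
  - simpl length. rewrite sumR_shift.
    rewrite (sumR_ext _ _ (fun i => if Nat.ltb (nth (S i) rest 0%nat) (nth i rest 0%nat)
                                     then F (a :: dec_row rest i) else 0)).
    2:{ intros i _. reflexivity. }
    rewrite <- (IH (nonincr_tl _ _ Hx) (fun y => F (a :: y))).
    assert (Hb := nonincr_hd _ _ Hx).
    replace (nth 1 (a :: rest) 0%nat) with (hd 0%nat rest) by (destruct rest; reflexivity).
    replace (nth 0 (a :: rest) 0%nat) with a by reflexivity. rewrite dec_row_0.
    cbn [inat]. rewrite sR_flat_map.
    assert (Hlast : sR (map (cons a) (inat rest))
       (fun y => if Nat.eq_dec (S (size y)) (size (a :: rest)) then F y else 0) =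
       sR (inat rest) (fun y => if Nat.eq_dec (S (size y)) (size rest) then F (a :: y) else 0)).
    { rewrite sR_map. apply sR_ext_in. intros y' _. rewrite !size_cons.
      destruct (Nat.eq_dec (S (a + size y')) (a + size rest)); destruct (Nat.eq_dec (S (size y')) (size rest)); try lia; reflexivity. }
    destruct (Nat.ltb_spec (hd 0%nat rest) a) as [Hlt|Hge].
    + replace (range (hd 0%nat rest) a) with
        (map (Nat.add (hd 0%nat rest)) (seq 0 (a - 1 - hd 0%nat rest)) ++ [(a - 1)%nat; a]).
      2:{ unfold range. replace (S a - hd 0%nat rest)%nat with ((a - 1 - hd 0%nat rest) + 2)%nat by lia.
          rewrite seq_app, map_app. f_equal. simpl. f_equal; [lia|]. f_equal. lia. }
      rewrite map_app, fold_right_app. cbn [map fold_right]. rewrite fold_plus_init.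
      rewrite fold_zero.
      2:{ intros y0 Hy0. apply in_map_iff in Hy0. destruct Hy0 as [t [<- Ht]]. apply in_seq in Ht.
          rewrite sR_map. apply sR_zero. intros y' Hy'.
          match goal with |- context [Nat.eq_dec ?p ?q] => destruct (Nat.eq_dec p q) as [E|]; [|reflexivity] end.
          rewrite !size_cons in E. assert (Hs := inat_size _ _ Hy'). lia. }
      rewrite Hlast.
      rewrite sR_map.
      rewrite (sR_ext_in _ _ (fun y' => if Nat.eq_dec (size y') (size rest) then F ((a - 1)%nat :: y') else 0)).
      2:{ intros y' _. rewrite !size_cons.
          destruct (Nat.eq_dec (S (a - 1 + size y')) (a + size rest)); destruct (Nat.eq_dec (size y') (size rest)); try lia; reflexivity. }
      rewrite (L1 rest (nonincr_tl _ _ Hx) (fun y' => F ((a - 1)%nat :: y'))). ring.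
    + replace (range (hd 0%nat rest) a) with [a].
      2:{ unfold range. replace (S a - hd 0%nat rest)%nat with 1%nat by lia. simpl. f_equal. lia. }
      cbn [map fold_right]. rewrite Hlast. ring.
Qed.

Open Scope R_scope.

Lemma containedb_spec mu x : containedb mu x = true <-> contained mu x.
Proof.
  unfold containedb, contained. rewrite forallb_forall. split.
  - intros H i. destruct (Nat.lt_ge_cases i (length mu)).
    + specialize (H i ltac:(apply in_seq; lia)). apply Nat.leb_le in H. exact H.
    + rewrite (@nth_overflow _ mu i) by lia. lia.
  - intros H i Hi. apply Nat.leb_le. apply H.
Qed.

Lemma contained_size u : forall v, contained u v -> (size u <= size v)%nat.
Proof.
  unfold contained. induction u as [|a u IH]; intros v H; [simpl; lia|].
  destruct v as [|b v].
  - assert (H0 := H 0%nat). simpl in H0.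
    assert (size u <= size [])%nat by (apply IH; intros i; generalize (H (S i)); simpl; destruct i; simpl; lia).
    rewrite size_cons. simpl in *. lia.
  - rewrite !size_cons. assert (H0 := H 0%nat). simpl in H0.
    assert (size u <= size v)%nat by (apply IH; intros i; apply (H (S i))). lia.
Qed.

Lemma contained_eq u : forall v, contained u v -> (size v <= size u)%nat ->
  forall i, nth i u 0%nat = nth i v 0%nat.
Proof.
  unfold contained. induction u as [|a u IH]; intros v H Hs i.
  - destruct v as [|b v]; [destruct i; reflexivity|].
    unfold size in Hs. simpl in Hs.
    assert (Hz := list_sum_zero v ltac:(lia)).
    destruct i; simpl; [lia|]. rewrite Hz. reflexivity.
  - destruct v as [|b v].
    + assert (Hu : (size u <= size [])%nat) by (apply contained_size; intros j; generalize (H (S j)); simpl; destruct j; simpl; lia).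
      assert (Ha := H 0%nat). simpl in Ha.
      unfold size in Hu. simpl in Hu.
      assert (Hz := list_sum_zero u ltac:(lia)).
      destruct i; simpl; [lia|]. rewrite Hz. reflexivity.
    + rewrite !size_cons in Hs. assert (Ha := H 0%nat). simpl in Ha.
      assert (size u <= size v)%nat by (apply contained_size; intros j; apply (H (S j))).
      destruct i; simpl; [lia|]. apply IH; [intros j; apply (H (S j))|lia].
Qed.

Lemma list_sum_zero_l {A} (g : A -> nat) l : (forall a, In a l -> g a = 0%nat) ->
  list_sum (map g l) = 0%nat.
Proof.
  induction l; intros H; simpl; [reflexivity|].
  rewrite H by (left; auto). rewrite IHl by (intros; apply H; right; auto). reflexivity.
Qed.

Section BC.
Variable mu : list nat.
Variable K : nat.
Hypothesis HmuK : (length mu <= K)%nat.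
Let t := mu ++ repeat 0%nat (K - length mu).

Lemma nth_t i : nth i t 0%nat = nth i mu 0%nat.
Proof.
  unfold t. destruct (Nat.lt_ge_cases i (length mu)).
  - apply app_nth1; auto.
  - rewrite app_nth2 by auto. rewrite nth_repeat. rewrite (@nth_overflow _ mu i) by lia. reflexivity.
Qed.
Lemma length_t : length t = K.
Proof. unfold t. rewrite length_app, repeat_length. lia. Qed.
Lemma contained_t : contained mu t.
Proof. intros i. rewrite nth_t. lia. Qed.
Lemma size_t : size t = size mu.
Proof.
  unfold t, size. rewrite list_sum_app.
  assert (forall n, list_sum (repeat 0%nat n) = 0%nat) as Hr by (induction n; simpl; auto).
  rewrite Hr. lia.
Qed.

Lemma bc_zero : forall D x, ~ contained mu x -> bc t D x = 0%nat.
Proof.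
  induction D as [|D IH]; intros x Hx; simpl.
  - destruct (list_eq_dec Nat.eq_dec x t) as [->|]; [exfalso; apply Hx, contained_t|reflexivity].
  - apply list_sum_zero_l. intros y Hy. apply IH. intros Hc. apply Hx. intros i.
    specialize (Hc i). assert (Hb := inat_bounds x y Hy i). lia.
Qed.

Lemma bc_base : nonincr t -> forall D, bc t D t = 1%nat.
Proof.
  intros Ht. induction D as [|D IH].
  - simpl. destruct (list_eq_dec Nat.eq_dec t t); [reflexivity|congruence].
  - apply INR_eq. cbn [bc]. rewrite INR_list_sum_map. fold (sR (inat t) (fun y => INR (bc t D y))).
    rewrite (sR_ext_in _ _ (fun y => if Nat.eq_dec (size y) (size t) then INR (bc t D y) else 0)).
    + rewrite L1 by auto. rewrite IH. reflexivity.
    + intros y Hy. destruct (Nat.eq_dec (size y) (size t)); [reflexivity|].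
      rewrite bc_zero; [reflexivity|]. intros Hc.
      assert (H1 := contained_size _ _ Hc). assert (H2 := inat_size _ _ Hy).
      rewrite size_t in *. lia.
Qed.

Lemma inat_nonincr x y : In y (inat x) -> nonincr y.
Proof.
  intros Hy i. assert (H1 := inat_bounds x y Hy i). assert (H2 := inat_bounds x y Hy (S i)). lia.
Qed.

Lemma inv_pow_lim j : is_lim_seq (fun D => / INR D ^ S j) 0.
Proof.
  induction j.
  - apply is_lim_seq_ext with (fun D => / INR D); [intros; simpl; rewrite Rmult_1_r; reflexivity|].
    apply lim_inv_n.
  - apply is_lim_seq_ext_loc with (fun D => / INR D * / INR D ^ S j).
    + exists 1%nat. intros n Hn. assert (INR n <> 0) by (apply not_0_INR; lia).
      change (INR n ^ S (S j)) with (INR n * INR n ^ S j). rewrite Rinv_mult. reflexivity.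
    + replace (Finite 0) with (Finite (0 * 0)) by (f_equal; ring).
      apply is_lim_seq_mult'; auto. apply lim_inv_n.
Qed.

Theorem bc_asym : forall n x, size x = n -> length x = K -> nonincr x -> contained mu x ->
  is_lim_seq (fun D => INR (bc t D x) / INR D ^ (size x - size mu))
             (INR (skew_count (size x - size mu) x mu) / INR (fact (size x - size mu))).
Proof.
  intros n. induction n as [n IHn] using lt_wf_ind. intros x Hn Hlen Hx Hc.
  assert (Hsz := contained_size _ _ Hc).
  destruct (Nat.eq_dec (size x) (size mu)) as [E|E].
  - assert (Hxt : x = t).
    { apply nth_ext with 0%nat 0%nat; [rewrite length_t; auto|].
      intros i _. rewrite nth_t. symmetry. apply contained_eq; auto. lia. }
    rewrite E, Nat.sub_diag. subst x.
    apply is_lim_seq_ext with (fun _ => 1).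
    { intros D. rewrite bc_base by auto. simpl. field. }
    cbn [skew_count]. replace (containedb mu t) with true by (symmetry; apply containedb_spec; auto).
    simpl. replace (1/1) with 1 by field. apply is_lim_seq_const.
  - remember (size x - size mu)%nat as e eqn:He. destruct e as [|e']; [lia|].
    set (F := fun y => if containedb mu y then INR (skew_count e' y mu) / INR (fact e') else 0).
    set (s := fun D => sR (inat x) (fun y => if Nat.eq_dec (S (size y)) (size x) then INR (bc t D y) else 0)
                     + sR (inat x) (fun y => if le_dec (S (S (size y))) (size x) then INR (bc t D y) else 0)).
    assert (Hrec : forall D, INR (bc t (S D) x) = INR (bc t D x) + s D).
    { intros D. cbn [bc]. rewrite INR_list_sum_map. fold (sR (inat x) (fun y => INR (bc t D y))).
      rewrite (sR_ext_in _ _ (fun y => (if Nat.eq_dec (size y) (size x) then INR (bc t D y) else 0)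
         + ((if Nat.eq_dec (S (size y)) (size x) then INR (bc t D y) else 0)
         + (if le_dec (S (S (size y))) (size x) then INR (bc t D y) else 0)))).
      2:{ intros y Hy. assert (Hs := inat_size _ _ Hy).
          destruct (Nat.eq_dec (size y) (size x)); destruct (Nat.eq_dec (S (size y)) (size x));
          destruct (le_dec (S (S (size y))) (size x)); try lia; ring. }
      rewrite !sR_plus, L1 by auto. unfold s. ring. }
    assert (Hs : is_lim_seq (fun D => s D / INR D ^ e')
                   (sR (inat x) (fun y => if Nat.eq_dec (S (size y)) (size x) then F y else 0))).
    { apply is_lim_seq_ext with (fun D =>
         sR (inat x) (fun y => (if Nat.eq_dec (S (size y)) (size x) then INR (bc t D y) else 0) / INR D ^ e')
       + sR (inat x) (fun y => (if le_dec (S (S (size y))) (size x) then INR (bc t D y) else 0) / INR D ^ e')).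
      { intros D. unfold s. rewrite !sR_div. unfold Rdiv. ring. }
      replace (sR (inat x) (fun y => if Nat.eq_dec (S (size y)) (size x) then F y else 0)) with
        (sR (inat x) (fun y => if Nat.eq_dec (S (size y)) (size x) then F y else 0) + sR (inat x) (fun _ => 0)).
      2:{ rewrite (sR_zero (inat x) (fun _ => 0)) by auto. ring. }
      apply is_lim_seq_plus'; apply lim_sR; intros y Hy.
      - assert (Hly : length y = K) by (rewrite (inat_length _ _ Hy); auto).
        assert (Hny := inat_nonincr _ _ Hy).
        destruct (Nat.eq_dec (S (size y)) (size x)) as [Ey|Ey].
        + unfold F. destruct (containedb mu y) eqn:Hcb.
          * apply containedb_spec in Hcb.
            assert (Hsy := contained_size _ _ Hcb).
            assert (IH := IHn (size y) ltac:(lia) y eq_refl Hly Hny Hcb).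
            replace (size y - size mu)%nat with e' in IH by lia. exact IH.
          * apply is_lim_seq_ext with (fun _ => 0); [|apply is_lim_seq_const].
            intros D. rewrite bc_zero; [simpl; unfold Rdiv; ring|].
            intros Hc'. apply containedb_spec in Hc'. congruence.
        + apply is_lim_seq_ext with (fun _ => 0); [|apply is_lim_seq_const].
          intros D. unfold Rdiv; ring.
      - assert (Hly : length y = K) by (rewrite (inat_length _ _ Hy); auto).
        assert (Hny := inat_nonincr _ _ Hy).
        destruct (le_dec (S (S (size y))) (size x)) as [Ly|Ly].
        + destruct (containedb mu y) eqn:Hcb.
          * apply containedb_spec in Hcb.
            assert (Hsy := contained_size _ _ Hcb).
            assert (IH := IHn (size y) ltac:(lia) y eq_refl Hly Hny Hcb).
            set (ey := (size y - size mu)%nat) in IH.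
            apply is_lim_seq_ext_loc with (fun D => (INR (bc t D y) / INR D ^ ey) * / INR D ^ S (e' - ey - 1)).
            { exists 1%nat. intros D HD. assert (INR D <> 0) by (apply not_0_INR; lia).
              replace e' with (ey + S (e' - ey - 1))%nat at 2 by (unfold ey; lia).
              rewrite pow_add. unfold Rdiv. rewrite Rinv_mult. ring. }
            replace (Finite 0) with (Finite ((INR (skew_count ey y mu) / INR (fact ey)) * 0)) by (f_equal; ring).
            apply is_lim_seq_mult'; [exact IH| apply inv_pow_lim].
          * apply is_lim_seq_ext with (fun _ => 0); [|apply is_lim_seq_const].
            intros D. rewrite bc_zero; [simpl; unfold Rdiv; ring|].
            intros Hc'. apply containedb_spec in Hc'. congruence.
        + apply is_lim_seq_ext with (fun _ => 0); [|apply is_lim_seq_const].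
          intros D. unfold Rdiv; ring. }
    assert (Hst := stolz_pow (fun D => INR (bc t D x)) s e' _ Hrec Hs).
    replace (INR (skew_count (S e') x mu) / INR (fact (S e'))) with
      (sR (inat x) (fun y => if Nat.eq_dec (S (size y)) (size x) then F y else 0) / INR (S e')).
    { exact Hst. }
    rewrite L2 by auto. cbn [skew_count]. rewrite INR_list_sum_seq.
    rewrite (sumR_ext _ _ (fun i => / INR (fact e') * INR (if ((nth (S i) x 0%nat <? nth i x 0%nat) && (nth i mu 0%nat <? nth i x 0%nat))%bool
          then skew_count e' (dec_row x i) mu else 0%nat))).
    + rewrite sumR_scal. rewrite fact_simpl, mult_INR.
      assert (INR (fact e') <> 0) by (apply not_0_INR, fact_neq_0).
      assert (INR (S e') <> 0) by (apply not_0_INR; lia).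
      field. split; auto.
    + intros i Hi.
      destruct (Nat.ltb_spec (nth (S i) x 0%nat) (nth i x 0%nat)) as [C1|C1];
      destruct (Nat.ltb_spec (nth i mu 0%nat) (nth i x 0%nat)) as [C2|C2]; simpl andb; cbv iota.
      * unfold F. replace (containedb mu (dec_row x i)) with true.
        { unfold Rdiv. ring. }
        symmetry. apply containedb_spec. intros j. rewrite nth_dec_row by auto.
        destruct (Nat.eq_dec j i) as [->|]; [lia|apply Hc].
      * unfold F. replace (containedb mu (dec_row x i)) with false.
        { simpl. ring. }
        symmetry. destruct (containedb mu (dec_row x i)) eqn:Hcb; [|reflexivity].
        apply containedb_spec in Hcb. specialize (Hcb i). rewrite nth_dec_row in Hcb by auto.
        destruct (Nat.eq_dec i i); lia.
      * simpl. ring.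
      * simpl. ring.
Qed.

End BC.

Open Scope R_scope.

Lemma to_inf (s : nat -> nat) : (forall M, exists k0, forall k, (k0 <= k)%nat -> (M <= s k)%nat) ->
  filterlim s eventually eventually.
Proof.
  intros H P [N HN]. destruct (H N) as [k0 Hk0]. exists k0. intros k Hk. apply HN, Hk0; auto.
Qed.

Lemma lim_pow (u : nat -> R) (l : R) j : is_lim_seq u l -> is_lim_seq (fun k => u k ^ j) (l ^ j).
Proof.
  intros H. induction j.
  - simpl. apply is_lim_seq_const.
  - simpl. apply is_lim_seq_mult'; [exact H|exact IHj].
Qed.

Lemma pow_div' (a b : R) n : b <> 0 -> (a / b) ^ n = a ^ n / b ^ n.
Proof.
  intros Hb. induction n; simpl; [field|]. rewrite IHn. field. split; auto. apply pow_nonzero; auto.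
Qed.

Lemma young_nonincr x : young x -> nonincr x.
Proof.
  intros [H1 _] i. destruct (Nat.lt_ge_cases (S i) (length x)).
  - apply H1; auto.
  - rewrite (@nth_overflow _ x (S i)) by lia. lia.
Qed.

Lemma INR_dim x : nonincr x -> INR (dim x) = INR (fact (size x)) * Gx x.
Proof.
  intros Hx. unfold dim, dim_skew. replace (containedb [] x) with true by reflexivity.
  replace (size x - size [])%nat with (size x) by (simpl; unfold size; simpl; lia).
  apply dim_formula; auto.
Qed.

Lemma DimN_pos x N : nonincr x -> (length x <= N)%nat -> 0 < DimN N (sig_of N x).
Proof.
  intros Hx HN. rewrite DimN_sig, Vf_big by auto.
  apply Rmult_lt_0_compat; [apply Vf_pos; auto|].
  apply prodR_pos. intros i Hi. apply Rdiv_lt_0_compat; [|apply Rk_pos; auto].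
  apply prodR_pos. intros s _. assert (INR i < INR N) by (apply lt_INR; lia).
  assert (0 <= INR s) by apply pos_INR. lra.
Qed.

Theorem theorem7 (r r' : R) (lam mu : list nat)
  (hr : 0 < r) (hrr : r < r')
  (hlam : young lam) (hmu : young mu) (hsub : contained mu lam)
  (Nk N'k : nat -> nat)
  (hlt : forall k, (Nk k < N'k k)%nat)
  (hinf : forall M : nat, exists k0 : nat, forall k, (k0 <= k)%nat -> (M <= Nk k)%nat)
  (hratio : Un_cv (fun k => INR (N'k k) / INR (Nk k)) (r' / r)) :
  Un_cv (fun k => GT_link (N'k k) (Nk k) (sig_of (N'k k) lam) (sig_of (Nk k) mu))
        (YB_link r' r lam mu).
Proof.
  set (K := length lam).
  assert (Hnl := young_nonincr _ hlam). assert (Hnm := young_nonincr _ hmu).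
  assert (HmuK : (length mu <= K)%nat).
  { destruct (Nat.le_gt_cases (length mu) K); auto.
    destruct hmu as [_ Hp]. specialize (Hp K H). specialize (hsub K).
    rewrite (@nth_overflow _ lam K) in hsub by (unfold K; lia). lia. }
  assert (Hcb : containedb mu lam = true) by (apply containedb_spec; auto).
  assert (Hsz := contained_size _ _ hsub).
  set (m := size mu). set (d := (size lam - size mu)%nat).
  assert (Hn : size lam = (m + d)%nat) by (unfold m, d; lia).
  set (t := mu ++ repeat 0%nat (K - length mu)).
  set (M := fun k => (N'k k - Nk k)%nat).
  assert (HNinf : filterlim Nk eventually eventually) by (apply to_inf; auto).
  assert (HN'inf : filterlim N'k eventually eventually).
  { apply to_inf. intros B. destruct (hinf B) as [k0 Hk0]. exists k0. intros k Hk.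
    specialize (Hk0 k Hk). specialize (hlt k). lia. }
  assert (Hrat := proj2 (is_lim_seq_Reals _ _) hratio).
  assert (Hq : is_lim_seq (fun k => INR (Nk k) / INR (N'k k)) (r / r')).
  { apply is_lim_seq_ext_loc with (fun k => / (INR (N'k k) / INR (Nk k))).
    - destruct (hinf 1%nat) as [k0 Hk0]. exists k0. intros k Hk. specialize (Hk0 k Hk).
      specialize (hlt k). assert (INR (Nk k) <> 0) by (apply not_0_INR; lia).
      assert (INR (N'k k) <> 0) by (apply not_0_INR; lia). field. auto.
    - replace (Finite (r / r')) with (Rbar_inv (r' / r)) by (simpl; f_equal; field; lra).
      apply is_lim_seq_inv; auto. simpl. intros E. injection E. intros E'.
      assert (0 < r' / r) by (apply Rdiv_lt_0_compat; lra). lra. }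
  assert (HqM : is_lim_seq (fun k => INR (M k) / INR (N'k k)) (1 - r / r')).
  { apply is_lim_seq_ext_loc with (fun k => 1 - INR (Nk k) / INR (N'k k)).
    - exists 0%nat. intros k _. unfold M. specialize (hlt k). rewrite minus_INR by lia.
      assert (INR (N'k k) <> 0) by (apply not_0_INR; lia). field. auto.
    - apply is_lim_seq_minus'; [apply is_lim_seq_const|auto]. }
  assert (HMinf : filterlim M eventually eventually).
  { apply to_inf. intros B.
    set (q := (1 + r' / r) / 2).
    assert (Hq1 : 1 < r' / r).
    { apply (Rmult_lt_reg_r r); [lra|]. unfold Rdiv. rewrite Rmult_assoc, Rinv_l by lra. lra. }
    destruct (hratio (r' / r - q)) as [k1 Hk1]; [unfold q; lra|].
    destruct (hinf (S (Z.to_nat (up (INR B / (q - 1)))))) as [k2 Hk2].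
    exists (k1 + k2)%nat. intros k Hk.
    specialize (Hk1 k ltac:(lia)). specialize (Hk2 k ltac:(lia)). specialize (hlt k).
    unfold Rdist in Hk1. apply Rabs_def2 in Hk1. destruct Hk1 as [_ Hk1].
    assert (HN0 : 0 < INR (Nk k)) by (apply lt_0_INR; lia).
    assert (Hgt : q * INR (Nk k) < INR (N'k k)).
    { assert (Hx : q < INR (N'k k) / INR (Nk k)) by lra.
      apply (Rmult_lt_compat_r (INR (Nk k))) in Hx; auto.
      unfold Rdiv in Hx. rewrite Rmult_assoc, Rinv_l in Hx by lra. lra. }
    assert (HB : INR B / (q - 1) < INR (Nk k)).
    { destruct (archimed (INR B / (q - 1))) as [Ha _].
      assert (IZR (up (INR B / (q - 1))) <= INR (Z.to_nat (up (INR B / (q - 1))))).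
      { destruct (Z_le_gt_dec (up (INR B / (q - 1))) 0).
        - assert (IZR (up (INR B / (q - 1))) <= 0) by (apply IZR_le; lia).
          assert (0 <= INR (Z.to_nat (up (INR B / (q - 1))))) by apply pos_INR. lra.
        - assert (E : INR (Z.to_nat (up (INR B / (q - 1)))) = IZR (up (INR B / (q - 1)))).
          { rewrite (INR_IZR_INZ (Z.to_nat _)). f_equal. lia. }
          lra. }
      assert (INR (Z.to_nat (up (INR B / (q - 1)))) < INR (Nk k)) by (apply lt_INR; lia). lra. }
    assert (Hq0 : 0 < q - 1) by (unfold q; lra).
    assert (INR B < (q - 1) * INR (Nk k)).
    { apply (Rmult_lt_compat_l (q - 1)) in HB; auto. unfold Rdiv in HB.
      rewrite <- Rmult_assoc, (Rmult_comm (q - 1)), Rmult_assoc, Rinv_r in HB by lra. lra. }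
    assert (HBM : INR B < INR (M k)).
    { unfold M. rewrite minus_INR by lia. nra. }
    apply INR_lt in HBM. unfold M in *. lia. }
  assert (Ha := is_lim_seq_subseq _ _ _ HNinf (DimN_asym mu Hnm)).
  assert (Hc := is_lim_seq_subseq _ _ _ HN'inf (DimN_asym lam Hnl)).
  assert (Hb := is_lim_seq_subseq _ _ _ HMinf
     (bc_asym mu K HmuK (size lam) lam eq_refl eq_refl Hnl hsub)).
  fold t d in Hb. simpl in Ha, Hb, Hc.
  apply is_lim_seq_Reals.
  apply is_lim_seq_ext_loc with (fun k =>
     (DimN (Nk k) (sig_of (Nk k) mu) / INR (Nk k) ^ size mu) *
     (INR (bc t (M k) lam) / INR (M k) ^ d) /
     (DimN (N'k k) (sig_of (N'k k) lam) / INR (N'k k) ^ size lam) *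
     (INR (Nk k) / INR (N'k k)) ^ m * (INR (M k) / INR (N'k k)) ^ d).
  - destruct (hinf (S K)) as [k0 Hk0]. exists k0. intros k Hk. specialize (Hk0 k Hk).
    specialize (hlt k).
    unfold GT_link, DimKN.
    replace (chains_count (sig_of (Nk k) mu) (N'k k - Nk k) (sig_of (N'k k) lam)) with (bc t (M k) lam).
    2:{ unfold t. rewrite <- (chains_bc mu K HmuK (M k) lam (Nk k) eq_refl ltac:(lia)).
        f_equal. f_equal. unfold M. lia. }
    assert (H1 : INR (Nk k) <> 0) by (apply not_0_INR; lia).
    assert (H2 : INR (N'k k) <> 0) by (apply not_0_INR; lia).
    assert (H3 : INR (M k) <> 0) by (apply not_0_INR; unfold M; lia).
    assert (H4 : 0 < DimN (N'k k) (sig_of (N'k k) lam)) by (apply DimN_pos; auto; unfold K in Hk0; lia).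
    rewrite Hn, pow_add. fold m.
    rewrite !pow_div' by auto.
    field. repeat split; try lra; apply pow_nonzero; auto.
  - unfold YB_link. rewrite Hcb. unfold dim_skew at 1. rewrite Hcb. fold d.
    rewrite !INR_dim by auto. unfold Binomial.C. fold m. rewrite Hn.
    replace (m + d - m)%nat with d by lia.
    assert (Gl := Gx_pos lam Hnl). assert (Gm := Gx_pos mu Hnm).
    assert (F1 : INR (fact m) <> 0) by (apply not_0_INR, fact_neq_0).
    assert (F2 : INR (fact d) <> 0) by (apply not_0_INR, fact_neq_0).
    assert (F3 : INR (fact (m + d)) <> 0) by (apply not_0_INR, fact_neq_0).
    replace (INR (fact (m + d)) / (INR (fact m) * INR (fact d)) * (r / r') ^ m * (1 - r / r') ^ d *
      (INR (fact m) * Gx mu * INR (skew_count d lam mu) / (INR (fact (m + d)) * Gx lam)))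
    with (Gx mu * (INR (skew_count d lam mu) / INR (fact d)) / Gx lam * (r / r') ^ m * (1 - r / r') ^ d)
      by (field; repeat split; lra).
    apply is_lim_seq_mult'; [apply is_lim_seq_mult'|apply lim_pow; auto]; [|apply lim_pow; auto].
    apply is_lim_seq_div'; [apply is_lim_seq_mult'; auto| rewrite <- Hn; exact Hc |lra].
Qed.
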